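(* Let $P=[0,1]$, let $r$ be a positive integer, let $\sigma_r=\sum_{i=r+1}^{2r+1}\frac1i$, and let $Q=\{q_1,\dots,q_r\}$ with $q_i=\frac{1}{\sigma_r}\sum_{j=r+1}^{r+i}\frac1j$ for $i\in[r]$ (so the $r+1$ intervals cut from $[0,1]$ by $Q$ have lengths proportional to $\frac1{r+1}:\frac1{r+2}:\dots:\frac1{2r+1}$). Let $\tau$ be any ordering of $Q$. Consider the online algorithm that maintains a set $\hat Q$ of positions ever used, each labelled occupied or vacant (initially empty); when a point departs its position becomes vacant; when a point arrives, if some position in $\hat Q$ is vacant the point is put at an arbitrary vacant position (now occupied); otherwise, if $Q\not\subseteq\hat Q$ the point is put at the first position of $Q\setminus\hat Q$ according to $\tau$, and if $Q\subseteq\hat Q$ it is put at the midpoint of a largest interval into which $[0,1]$ is divided by $\hat Q$; in both latter cases the new position is added to $\hat Q$ as occupied. Then for every instance $S$ whose maximum number $m$ of simultaneously present points satisfies $m>r$, we have $OPT_A(S;P)\le 2\sigma_r\cdot\min_{t\le T}d_{min}(t;X)$, where $X$ is the algorithm's output.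
   Context: Distances are Euclidean; $\partial P=\{0,1\}$. An instance is a sequence $S=((s_1,d_1),\dots,(s_n,d_n))$ with $s_i<d_i$, $0=s_1\le\dots\le s_n$; point $i$ is present at time $t$ iff $s_i\le t\le d_i$; $T=\max_i d_i$; $m=\max_{t\le T}|\{i:s_i\le t\le d_i\}|$. For locations $X=(X_1,\dots,X_n)\in P^n$, $d_{min}(t;X)=\min\{dis(X_i,\partial P),dis(X_i,X_j)\}$ over present points $i\ne j$ at time $t$, and $OPT_A(S;P)=\max_X\min_{t\le T}d_{min}(t;X)$. The algorithm is online: it places each arriving point irrevocably without knowing future events; events are chosen by an adaptive adversary. *)

(* Defs.v *)
From HB Require Import structures.
From mathcomp Require Import all_boot all_order all_algebra all_fingroup.
From mathcomp Require Import boolp classical_sets reals ereal.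
Set Implicit Arguments. Unset Strict Implicit. Unset Printing Implicit Defensive.
Import Order.TTheory GRing.Theory Num.Theory.
Local Open Scope classical_set_scope.
Local Open Scope ring_scope.

Section Defs.
Variable R : realType.

Definition sigma (r : nat) : R := \sum_(r.+1 <= i < (2 * r + 1).+1) (i%:R)^-1.

Definition qpos (r i : nat) : R :=
  (sigma r)^-1 * \sum_(r.+1 <= j < (r + i).+1) (j%:R)^-1.

Definition Qpt (r : nat) (k : 'I_r) : R := qpos r k.+1.

(* An instance: n points, arrival times s, departure times d. *)
Definition instance (n : nat) (s d : 'I_n -> R) : Prop :=
  [/\ forall i, s i < d i,
      forall i : 'I_n, val i = 0%N -> s i = 0
    & forall i j : 'I_n, (i <= j)%N -> s i <= s j].

Definition present n (s d : 'I_n -> R) (i : 'I_n) (t : R) : bool :=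
  (s i <= t) && (t <= d i).

Definition horizon n (d : 'I_n -> R) : R := \big[Num.max/0]_(i < n) d i.

Definition load n (s d : 'I_n -> R) (t : R) : nat := #|[set i | present s d i t]|.

Definition dist_bd (x : R) : R := Num.min `|x - 0| `|x - 1|.

Definition dmin n (s d : 'I_n -> R) (X : 'I_n -> R) (t : R) : \bar R :=
  \big[Order.min/+oo%E]_(i | present s d i t)
     Order.min (dist_bd (X i))%:E
       (\big[Order.min/+oo%E]_(j | present s d j t && (j != i)) (`|X i - X j|)%:E).

Definition objective n (s d : 'I_n -> R) (X : 'I_n -> R) : \bar R :=
  ereal_inf [set dmin s d X t | t in [set t | t <= horizon d]].

Definition inP n (X : 'I_n -> R) : Prop := forall i, 0 <= X i <= 1.

Definition OPT_A n (s d : 'I_n -> R) : \bar R :=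
  ereal_sup [set objective s d X | X in [set X | inP X]].

(* ---- the online algorithm ---------------------------------------------
   Points arrive in index order (s nondecreasing, ties by index).  A point
   departing at time t is still present at t, so departures at time t are
   processed after the arrivals at time t.  When point i arrives:
   - Qhat (positions ever used) = { X j | j < i };
   - a position x is occupied iff x = X j for some j < i still present,
     i.e. with s i <= d j; it is vacant iff it is in Qhat and not occupied. *)
Definition used n (X : 'I_n -> R) (i : 'I_n) (x : R) : Prop :=
  exists j : 'I_n, (j < i)%N /\ X j = x.

Definition occupied n (s d X : 'I_n -> R) (i : 'I_n) (x : R) : Prop :=
  exists j : 'I_n, [/\ (j < i)%N, s i <= d j & X j = x].

Definition vacant n (s d X : 'I_n -> R) (i : 'I_n) (x : R) : Prop :=
  used X i x /\ ~ occupied s d X i x.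

Definition gap n (X : 'I_n -> R) (i : 'I_n) (a b : R) : Prop :=
  [/\ a = 0 \/ used X i a, b = 1 \/ used X i b, a < b
    & forall j : 'I_n, (j < i)%N -> ~ (a < X j < b)].

Definition alg_step (r : nat) (tau : 'S_r) n (s d X : 'I_n -> R) (i : 'I_n) : Prop :=
  ((exists x, vacant s d X i x) /\ vacant s d X i (X i))
  \/
  ((~ exists x, vacant s d X i x) /\ (exists k : 'I_r, ~ used X i (Qpt k)) /\
   exists k : 'I_r, [/\ X i = Qpt (tau k), ~ used X i (Qpt (tau k))
                      & forall k' : 'I_r, (k' < k)%N -> used X i (Qpt (tau k'))])
  \/
  ((~ exists x, vacant s d X i x) /\ (forall k : 'I_r, used X i (Qpt k)) /\
   exists a b, [/\ gap X i a b,
                  forall a' b', gap X i a' b' -> b' - a' <= b - a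
                & X i = (a + b) / 2]).

Definition alg_output (r : nat) (tau : 'S_r) n (s d X : 'I_n -> R) : Prop :=
  forall i : 'I_n, alg_step tau s d X i.

End Defs.

(* Main.v *)
Require Import Defs.
From HB Require Import structures.
From mathcomp Require Import all_boot all_order all_algebra all_fingroup.
From mathcomp Require Import boolp classical_sets reals ereal.
From mathcomp Require Import ring lra zify.
Import Order.TTheory GRing.Theory Num.Theory.
Local Open Scope ring_scope.


Section Arith.
Variable R : realType.
Variable r : nat.
Local Notation sg := (sigma R r).

Lemma sigma_gt0 : 0 < sg.
Proof.
rewrite /sigma big_ltn; last by rewrite ltnS; lia.
apply: ltr_wpDr; first by apply: sumr_ge0 => i _; rewrite invr_ge0.
by rewrite invr_gt0 ltr0n.
Qed.

Definition lenj (j e : nat) : R := ((2:R) ^+ e * (sg * j%:R))^-1.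

Lemma qpos_S m : qpos R r m.+1 = qpos R r m + lenj (r + m).+1 0.
Proof.
rewrite /qpos /lenj addnS big_nat_recr /=; last by rewrite ltnS leq_addr.
rewrite mulrDr expr0 mul1r invfM //.
Qed.

Lemma lenj_gt0 j e : (0 < j)%N -> 0 < lenj j e.
Proof.
move=> hj; rewrite /lenj invr_gt0; apply: mulr_gt0; first exact: exprn_gt0.
by apply: mulr_gt0; [exact: sigma_gt0| rewrite ltr0n].
Qed.

Lemma qpos0 : qpos R r 0 = 0.
Proof. by rewrite /qpos addn0 big_geq // mulr0. Qed.

Lemma qpos_last : qpos R r r.+1 = 1.
Proof.
rewrite /qpos /sigma.
have -> : (r + r.+1 = 2 * r + 1)%N by lia.
by rewrite mulVf // gt_eqF // sigma_gt0.
Qed.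

Lemma qpos_lt : {homo qpos R r : i j / (i < j)%N >-> i < j}.
Proof.
apply: homo_ltn; first by move=> y x z; apply: lt_trans.
by move=> i; rewrite qpos_S ltrDl lenj_gt0.
Qed.

Lemma qpos_le i j : (i <= j)%N -> qpos R r i <= qpos R r j.
Proof. by rewrite leq_eqVlt => /orP[/eqP->//|/qpos_lt/ltW]. Qed.

Lemma qpos_ltE i j : (qpos R r i < qpos R r j) = (i < j)%N.
Proof.
case: (ltnP i j) => [/qpos_lt -> //|/qpos_le h]; apply/negbTE; rewrite -leNgt //.
Qed.

Lemma wsum_bound (M : R) (a k : nat) :
  k%:R + a%:R + Num.min M (a%:R + k%:R) <=
  \sum_(a <= j < a + k) (if j%:R < M then 2 else 1 : R) + a%:R *+ 2.
Proof.
elim: k => [|k IH].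
  rewrite addn0 big_geq // add0r addr0 add0r mulr2n lerD2l.
  by rewrite ge_min lexx orbT.
rewrite addnS big_nat_recr /=; last by rewrite leq_addr.
rewrite -(natr1 k) natrD.
case: ifP => hb.
- have h1 : Num.min M (a%:R + (k%:R + 1)) <= a%:R + (k%:R + 1) by rewrite ge_min lexx orbT.
  have h2 : Num.min M (a%:R + k%:R) = a%:R + k%:R.
    by apply/min_idPr; rewrite ltW.
  move: IH; rewrite h2 => IH.
  lra.
- have hMb : M <= a%:R + k%:R by rewrite leNgt hb.
  have h2 : Num.min M (a%:R + k%:R) = M by apply/min_idPl.
  have h3 : Num.min M (a%:R + (k%:R + 1)) = M by apply/min_idPl; lra.
  move: IH; rewrite h2 h3 => IH; lra.
Qed.

Lemma powsum (rr : nat) (M : R) (c : nat -> nat) :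
  (forall j, (rr < j <= 2 * rr + 1)%N -> M <= 2 ^+ (c j) * j%:R) ->
  M <= \sum_(rr.+1 <= j < (2 * rr + 1).+1) (2 : R) ^+ (c j).
Proof.
move=> H.
have [N hN0] : exists N, forall j, (rr < j <= 2 * rr + 1)%N -> (c j <= N)%N.
  exists (\max_(j < (2 * rr + 1).+1) c j).
  move=> j /andP[_ hj]; rewrite -ltnS in hj.
  exact: (@leq_bigmax _ (fun j : 'I__ => c j) (Ordinal hj)).
elim: N M c H hN0 => [|N IH] M c H hN;
  case: (boolP (has (fun j => c j == 0%N) (index_iota rr.+1 (2 * rr + 1).+1))).
- move=> /hasP[j0]; rewrite mem_index_iota => hj0 /eqP c0.
  have := H j0 ltac:(lia); rewrite c0 expr0 mul1r => hM.
  have hM' : M <= (2 * rr + 1)%:R by apply: (le_trans hM); rewrite ler_nat; lia.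
  have := wsum_bound M rr.+1 rr.+1.
  have -> : (rr.+1 + rr.+1 = (2 * rr + 1).+1)%N by lia.
  have -> : Num.min M (rr.+1%:R + rr.+1%:R) = M.
    apply/min_idPl; rewrite -natrD; apply: (le_trans hM'); rewrite ler_nat; lia.
  move=> hw.
  have : \sum_(rr.+1 <= j < (2 * rr + 1).+1) (if j%:R < M then 2 else 1 : R) <=
         \sum_(rr.+1 <= j < (2 * rr + 1).+1) (2 : R) ^+ (c j).
    rewrite big_nat [X in _ <= X]big_nat; apply: ler_sum => j hj.
    case: ifP => hjM.
    + have cj : c j <> 0%N.
        move=> cj0; have := H j ltac:(lia); rewrite cj0 expr0 mul1r => h.
        by move: hjM; rewrite ltNge h.
      case E : (c j) => [|k]; first by [].
      rewrite exprS -[X in X <= _]mulr1; apply: ler_wpM2l => //; apply: exprn_ege1; lra.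
    + apply: exprn_ege1; lra.
  move=> hs; lra.
- move=> hno; exfalso; move/negP: hno; apply.
  apply/hasP; exists rr.+1; first by rewrite mem_index_iota; lia.
  by rewrite -leqn0; apply: hN; lia.
- move=> /hasP[j0]; rewrite mem_index_iota => hj0 /eqP c0.
  have := H j0 ltac:(lia); rewrite c0 expr0 mul1r => hM.
  have hM' : M <= (2 * rr + 1)%:R by apply: (le_trans hM); rewrite ler_nat; lia.
  have := wsum_bound M rr.+1 rr.+1.
  have -> : (rr.+1 + rr.+1 = (2 * rr + 1).+1)%N by lia.
  have -> : Num.min M (rr.+1%:R + rr.+1%:R) = M.
    apply/min_idPl; rewrite -natrD; apply: (le_trans hM'); rewrite ler_nat; lia.
  move=> hw.
  have : \sum_(rr.+1 <= j < (2 * rr + 1).+1) (if j%:R < M then 2 else 1 : R) <=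
         \sum_(rr.+1 <= j < (2 * rr + 1).+1) (2 : R) ^+ (c j).
    rewrite big_nat [X in _ <= X]big_nat; apply: ler_sum => j hj.
    case: ifP => hjM.
    + have cj : c j <> 0%N.
        move=> cj0; have := H j ltac:(lia); rewrite cj0 expr0 mul1r => h.
        by move: hjM; rewrite ltNge h.
      case E : (c j) => [|k]; first by [].
      rewrite exprS -[X in X <= _]mulr1; apply: ler_wpM2l => //; apply: exprn_ege1; lra.
    + apply: exprn_ege1; lra.
  move=> hs; lra.
- move=> hno.
  have hpos : forall j, (rr < j <= 2 * rr + 1)%N -> (0 < c j)%N.
    move=> j hj; rewrite lt0n; apply/negP => /eqP cj; move/negP: hno; apply.
    by apply/hasP; exists j; [rewrite mem_index_iota; lia | rewrite cj].
  have := IH (M / 2) (fun j => (c j).-1).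
  have e2 : forall j, (rr < j <= 2 * rr + 1)%N -> (2 : R) ^+ c j = 2 * 2 ^+ (c j).-1.
    by move=> j hj; rewrite -exprS prednK // hpos.
  have -> : \sum_(rr.+1 <= j < (2 * rr + 1).+1) (2 : R) ^+ (c j) =
            2 * \sum_(rr.+1 <= j < (2 * rr + 1).+1) (2 : R) ^+ (c j).-1.
    rewrite mulr_sumr big_nat [in RHS]big_nat; apply: eq_bigr => j hj; apply: e2; lia.
  move=> h; suff : M / 2 <= \sum_(rr.+1 <= j < (2 * rr + 1).+1) (2 : R) ^+ (c j).-1 by lra.
  apply: h.
  + move=> j hj; have := H j hj; rewrite e2 // => h; lra.
  + move=> j hj; have := hN j hj; have := hpos j hj; lia.
Qed.

Lemma sum_delta (a b i : nat) (x : nat -> R) : (a <= i < b)%N ->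
  \sum_(j <- index_iota a b) (if i == j then x j else 0) = x i.
Proof.
move=> hi.
rewrite (bigD1_seq i) /=; last by rewrite /index_iota iota_uniq.
  rewrite eqxx big1 ?addr0 // => j; rewrite eq_sym => /negbTE -> //.
by rewrite mem_index_iota.
Qed.

Lemma count_bound (gs : seq (R * R)) (J E : R * R -> nat) (g : R) :
  0 < g ->
  (forall p, p \in gs -> (r < J p <= 2 * r + 1)%N) ->
  (forall p, p \in gs -> p.2 - p.1 = lenj (J p) (E p)) ->
  (forall j, (r < j <= 2 * r + 1)%N ->
     \sum_(p <- gs | J p == j) ((2:R) ^+ E p)^-1 = 1) ->
  (forall p, p \in gs -> p.2 - p.1 <= g) ->
  (sg * g)^-1 <= (size gs)%:R.
Proof.
move=> g0 hJ hlen hsum hg.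
set M := (sg * g)^-1.
have sg0 := sigma_gt0.
have exP : forall j, exists c, M <= (2:R) ^+ c * (maxn j 1)%:R.
  move=> j; have hM : 0 <= M by rewrite /M invr_ge0 ltW // mulr_gt0.
  exists (Num.Def.archi_bound M).
  apply: (le_trans (ltW (archi_boundP hM))).
  rewrite -natrX -natrM ler_nat.
  apply: (leq_trans (ltnW (ltn_expl _ (isT : (1 < 2)%N)))).
  by rewrite -{1}(muln1 (2 ^ _)%N) leq_mul2l leq_maxr orbT.
pose c j := ex_minn (exP j).
have cspec : forall j, M <= (2:R) ^+ c j * (maxn j 1)%:R.
  by move=> j; rewrite /c; case: ex_minnP.
have cmin : forall j k, M <= (2:R) ^+ k * (maxn j 1)%:R -> (c j <= k)%N.
  by move=> j k hk; rewrite /c; case: ex_minnP => m _ /(_ k hk).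
have step : forall p, p \in gs -> (2:R) ^+ c (J p) * ((2:R) ^+ E p)^-1 <= 1.
  move=> p hp.
  have hJp := hJ p hp.
  have hm : maxn (J p) 1 = J p by apply/maxn_idPl; lia.
  have hx : 0 < (2:R) ^+ E p * (J p)%:R.
    by apply: mulr_gt0; [exact: exprn_gt0 | rewrite ltr0n; lia].
  have hle : M <= (2:R) ^+ E p * (maxn (J p) 1)%:R.
    rewrite hm.
    have := hg p hp; rewrite hlen // /lenj mulrA => h.
    set x := (2:R) ^+ E p * sg * (J p)%:R in h.
    have hx' : 0 < x by rewrite /x mulrAC mulr_gt0.
    have h1 : 1 <= g * x.
      by have := ler_wpM2r (ltW hx') h; rewrite mulVf ?gt_eqF.
    rewrite /M -div1r ler_pdivrMr ?mulr_gt0 //.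
    have -> : (2:R) ^+ E p * (J p)%:R * (sg * g) = g * x by rewrite /x; ring.
    done.
  have := cmin _ _ hle => hc.
  rewrite ler_pdivrMr ?exprn_gt0 // mul1r.
  have h2 : (1:R) < 2 by lra.
  by rewrite (ler_eXn2l h2).
apply: (le_trans (powsum r M c _)).
  move=> j hj; have := cspec j.
  by have -> : maxn j 1 = j by apply/maxn_idPl; lia.
have -> : (size gs)%:R = \sum_(p <- gs) (1 : R) by rewrite -sum1_size natr_sum.
have hstep : \sum_(p <- gs) (2:R) ^+ c (J p) * ((2:R) ^+ E p)^-1 <= \sum_(p <- gs) (1:R).
  rewrite big_seq [X in _ <= X]big_seq; apply: ler_sum => p hp; exact: step.
apply: le_trans hstep.
have -> : \sum_(p <- gs) (2:R) ^+ c (J p) * ((2:R) ^+ E p)^-1 =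
  \sum_(p <- gs) \sum_(j <- index_iota r.+1 (2 * r + 1).+1)
     (if J p == j then (2:R) ^+ c j * ((2:R) ^+ E p)^-1 else 0).
  apply: eq_big_seq => p hp; rewrite (sum_delta _ _ _ (fun j => (2:R) ^+ c j * ((2:R) ^+ E p)^-1)) //; have := hJ p hp; lia.
rewrite exchange_big /= big_nat [X in _ <= X]big_nat.
apply: ler_sum => j hj.
rewrite -big_mkcond /= -mulr_sumr hsum ?mulr1 //; lia.
Qed.
End Arith.



Set Implicit Arguments. Unset Strict Implicit.
Section Geo.
Variable R : realType.
Implicit Types (P : R -> Prop) (a b x y z : R).

Definition gapU P a b : Prop :=
  [/\ a = 0 \/ P a, b = 1 \/ P b, a < b & forall x, P x -> ~ (a < x < b)].

Definition in01 P := forall x, P x -> 0 < x < 1.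

Lemma gapU_ext P P' : (forall x, P x <-> P' x) -> forall a b, gapU P a b <-> gapU P' a b.
Proof.
move=> h a b; split; case=> h1 h2 h3 h4; split => //.
- by case: h1 => [->|/h]; [left|right].
- by case: h2 => [->|/h]; [left|right].
- by move=> x /h; apply: h4.
- by case: h1 => [->|/h]; [left|right].
- by case: h2 => [->|/h]; [left|right].
- by move=> x /h; apply: h4.
Qed.

Lemma gapU_bounds P a b : in01 P -> gapU P a b -> 0 <= a /\ b <= 1.
Proof.
move=> h01 [ha hb hab _]; split.
- by case: ha => [->//|/h01/andP[/ltW]].
- by case: hb => [->//|/h01/andP[_ /ltW]].
Qed.

Lemma gap_left_inj P a b b' : in01 P -> gapU P a b -> gapU P a b' -> b = b'.
Proof.
move=> h01 g1 g2.
have [_ hb1] := gapU_bounds h01 g1; have [_ hb2] := gapU_bounds h01 g2.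
case: g1 => _ ob1 ab1 n1; case: g2 => _ ob2 ab2 n2.
case: (ltgtP b b') => // hlt.
- case: ob1 => [e|pb]; first lra.
  by exfalso; apply: (n2 b pb); rewrite ab1 hlt.
- case: ob2 => [e|pb]; first lra.
  by exfalso; apply: (n1 b' pb); rewrite ab2 hlt.
Qed.

Lemma gap_disj P a b x y z : in01 P -> gapU P a b -> gapU P x y ->
  a < z < b -> x < z < y -> (a, b) = (x, y).
Proof.
move=> h01 g1 g2 /andP[az zb] /andP[xz zy].
have [a0 _] := gapU_bounds h01 g1; have [x0 _] := gapU_bounds h01 g2.
have ax : a = x.
  case: (ltgtP a x) => // hlt.
  - case: g2 => [[e|px] _ _ _]; first lra.
    by exfalso; case: g1 => _ _ _ n1; apply: (n1 x px); apply/andP; split; lra.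
  - case: g1 => [[e|pa] _ _ _]; first lra.
    by exfalso; case: g2 => _ _ _ n2; apply: (n2 a pa); apply/andP; split; lra.
subst x; by rewrite (gap_left_inj h01 g1 g2).
Qed.

Lemma gap_mid P a b : in01 P -> gapU P a b ->
  forall x y, gapU (fun w => P w \/ w = (a + b) / 2) x y <->
    ((gapU P x y /\ (x, y) <> (a, b)) \/ (x, y) = (a, (a + b) / 2) \/ (x, y) = ((a + b) / 2, b)).
Proof.
move=> h01 gab; set m := (a + b) / 2.
have [a0 b1] := gapU_bounds h01 gab.
have [oa ob ab nab] := gab.
have am : a < m by rewrite /m; lra.
have mb : m < b by rewrite /m; lra.
have nPm : ~ P m by move=> pm; apply: (nab m pm); rewrite am mb.
move=> x y; split.
- case=> ox oy xy nxy.
  have nm : ~ (x < m < y) by move=> h; apply: (nxy m); [right|].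
  case: ox => [x0|[px|xm]]; case: oy => [y1|[py|ym]].
  + left; split; first by split; [left|left|..] => // w pw; apply: nxy; left.
    move=> [ex ey]; subst; apply: nm; rewrite /m; apply/andP; split; lra.
  + left; split; first by split; [left|right|..] => // w pw; apply: nxy; left.
    move=> [ex ey]; subst; apply: nm; apply/andP; split; lra.
  + right; left; subst y.
    have : x = a.
      case: (ltgtP x a) => // hlt.
      * case: oa => [e|pa]; first by lra.
        by exfalso; apply: (nxy a); [left | rewrite hlt am].
      * have : 0 <= x by lra.
        lra.
    by move=> ->.
  + left; split; first by split; [right|left|..] => // w pw; apply: nxy; left.
    move=> [ex ey]; subst; apply: nm; apply/andP; split; lra.
  + left; split; first by split; [right|right|..] => // w pw; apply: nxy; left.
    move=> [ex ey]; subst; apply: nm; apply/andP; split; lra.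
  + right; left; subst y.
    have : x = a.
      case: (ltgtP x a) => // hlt.
      * case: oa => [e|pa]; first by have := h01 x px; lra.
        by exfalso; apply: (nxy a); [left | rewrite hlt am].
      * by exfalso; apply: (nab x px); rewrite hlt /=; lra.
    by move=> ->.
  + right; right; subst x.
    have : y = b.
      case: ob => [e|pb]; first by rewrite e.
      have /andP[hb0 hb1] := h01 b pb; exfalso; apply: (nxy b); [by left | apply/andP; split; lra].
    by move=> ->.
  + right; right; subst x.
    have : y = b.
      case: (ltgtP y b) => // hlt.
      * by exfalso; apply: (nab y py); rewrite hlt andbT; lra.
      * case: ob => [e|pb]; first by have := h01 y py; lra.
        by exfalso; apply: (nxy b); [left | rewrite hlt mb].
    by move=> ->.
  + by subst; rewrite ltxx in xy.
- case=> [[[ox oy xy nxy] ne]|[[-> ->]|[-> ->]]].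
  + split => //.
    * by case: ox => h; [left | right; left].
    * by case: oy => h; [left | right; left].
    * move=> w [pw|->]; first exact: nxy.
      move=> hm; apply: ne; symmetry.
      by apply: (gap_disj h01 gab (And4 ox oy xy nxy) _ hm); rewrite am mb.
  + split => //.
    * by case: oa => h; [left | right; left].
    * by right; right.
    * move=> w [pw|->]; last by rewrite ltxx andbF.
      move=> /andP[h1 h2]; apply: (nab w pw); rewrite h1 /=; lra.
  + split => //.
    * by right; right.
    * by case: ob => h; [left | right; left].
    * move=> w [pw|->]; first by move=> /andP[h1 h2]; apply: (nab w pw); rewrite h2 andbT; lra.
      by rewrite ltxx.
Qed.
End Geo.


Set Implicit Arguments. Unset Strict Implicit.

Section Main.
Variable R : realType.
Variable r : nat.
Variable n : nat.
Variables s d X : 'I_n -> R.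
Local Notation sg := (sigma R r).

Definition U (k : nat) (x : R) : Prop := exists j : 'I_n, (j < k)%N /\ X j = x.

Lemma U_succ k (h : (k < n)%N) x : U k.+1 x <-> U k x \/ x = X (Ordinal h).
Proof.
split.
- move=> [j [hj <-]]; rewrite ltnS leq_eqVlt in hj; case/orP: hj => hj.
  + by right; congr X; apply: val_inj; rewrite /= (eqP hj).
  + by left; exists j.
- case=> [[j [hj <-]]|->]; first by exists j; split => //; lia.
  by exists (Ordinal h).
Qed.

Lemma U_mono k k' x : (k <= k')%N -> U k x -> U k' x.
Proof. by move=> hk [j [hj <-]]; exists j; split => //; lia. Qed.

Lemma gap_U (i : 'I_n) a b : gap X i a b <-> gapU (U i) a b.
Proof.
split; case=> h1 h2 h3 h4; split => //.
- by move=> x [j [hj <-]]; apply: h4.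
- by move=> j hj; apply: h4; exists j.
Qed.

Lemma gap_next k x y : in01 (U k) -> (x = 0 \/ U k x) -> (y = 1 \/ U k y) -> x < y ->
  exists z, gapU (U k) x z /\ z <= y.
Proof.
move=> h01 ox oy xy.
pose A := [pred j : 'I_n | (j < k)%N && (x < X j) && (X j < y)].
case: (pickP A) => [j0 hj0|hA].
- case: (arg_minP X hj0) => jm hAm hmin.
  move: (hAm); rewrite /A /= => /andP[/andP[jmk xjm] jmy].
  exists (X jm); split; last exact: ltW.
  split => //; first by right; exists jm.
  move=> w [j [hj <-]] /andP[h1 h2].
  have : A j by rewrite /A /= hj h1 /=; exact: (lt_trans h2 jmy).
  by move=> /hmin; rewrite leNgt h2.
- exists y; split => //; split => //.
  move=> w [j [hj <-]] /andP[h1 h2].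
  by have := hA j; rewrite /A /= hj h1 h2.
Qed.


Record inv3 (P : R -> Prop) (gs : seq (R * R)) (J E : R * R -> nat) : Prop := Inv3 {
  i3_uniq : uniq gs;
  i3_gap : forall a b, gapU P a b <-> (a, b) \in gs;
  i3_lab : forall p, p \in gs -> (r < J p <= 2 * r + 1)%N;
  i3_len : forall p, p \in gs -> p.2 - p.1 = lenj R r (J p) (E p);
  i3_sum : forall j, (r < j <= 2 * r + 1)%N ->
             \sum_(p <- gs | J p == j) ((2:R) ^+ E p)^-1 = 1;
  i3_ratio : forall p q, p \in gs -> q \in gs -> p.2 - p.1 <= 2 * (q.2 - q.1);
  i3_cnt : exists2 t, t <= horizon d & (size gs <= (load s d t).+1)%N }.

Lemma lenj_ratio0 j1 j2 : (r < j1 <= 2 * r + 1)%N -> (r < j2 <= 2 * r + 1)%N ->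
  lenj R r j1 0 <= 2 * lenj R r j2 0.
Proof.
move=> h1 h2; rewrite /lenj !expr0 !mul1r.
have s0 := sigma_gt0 R r.
have hj1 : (0 : R) < j1%:R by rewrite ltr0n; lia.
have hj2 : (0 : R) < j2%:R by rewrite ltr0n; lia.
rewrite -div1r ler_pdivrMr ?mulr_gt0 //.
have -> : 2 * (sg * j2%:R)^-1 * (sg * j1%:R) = (2 * j1%:R) / j2%:R.
  by field; rewrite ?gt_eqF.
rewrite ler_pdivlMr // mul1r -natrM ler_nat; lia.
Qed.

Definition qf (m : nat) : R * R := (qpos R r m, qpos R r m.+1).
Definition gs0 := mkseq qf r.+1.
Definition J0 (p : R * R) := (index p gs0 + r.+1)%N.

Lemma qf_inj : injective qf.
Proof.
move=> m1 m2 [h _]; case: (ltngtP m1 m2) => // hlt.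
- by have := @qpos_lt R r _ _ hlt; rewrite h ltxx.
- by have := @qpos_lt R r _ _ hlt; rewrite h ltxx.
Qed.

Lemma J0_qf m : (m < r.+1)%N -> J0 (qf m) = (m + r.+1)%N.
Proof.
move=> hm; rewrite /J0 -(nth_mkseq (qf 0) qf hm) index_uniq //.
- by rewrite size_mkseq.
- exact: mkseq_uniq qf_inj.
Qed.

Lemma gs0P p : p \in gs0 <-> exists2 m, (m < r.+1)%N & p = qf m.
Proof.
rewrite /gs0 /mkseq; split.
- by move=> /mapP[m]; rewrite mem_iota add0n => hm ->; exists m.
- by move=> [m hm ->]; apply: map_f; rewrite mem_iota.
Qed.

Lemma init_inv (P : R -> Prop) : (0 < r)%N ->
  (forall x, P x <-> exists q : 'I_r, x = Qpt R q) ->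
  (exists2 t, t <= horizon d & (r < load s d t)%N) ->
  in01 P /\ exists gs J E, inv3 P gs J E.
Proof.
move=> r0 hP [t0 ht0 hl0].
have PE : forall x, P x <-> exists2 m, (0 < m <= r)%N & x = qpos R r m.
  move=> x; rewrite hP; split.
  - by move=> [q ->]; exists q.+1 => //; rewrite /= ltn_ord.
  - move=> [m hm ->]; have hm' : (m.-1 < r)%N by lia.
    by exists (Ordinal hm'); rewrite /Qpt /=; congr qpos; lia.
have h01 : in01 P.
  move=> x /PE[m hm ->]; rewrite -(qpos0 R r) -(qpos_last R r) !qpos_ltE; lia.
split => //.
exists gs0, J0, (fun=> 0%N); split.
- exact: mkseq_uniq qf_inj.
- move=> a b; rewrite gs0P; split.
  + case=> oa ob ab nab.
    have [m1 hm1 ea] : exists2 m1, (m1 <= r)%N & a = qpos R r m1.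
      case: oa => [->|/PE[m hm ->]]; first by exists 0%N; [lia | rewrite (qpos0 R r)].
      by exists m => //; lia.
    have [m2 hm2 eb] : exists2 m2, (0 < m2 <= r.+1)%N & b = qpos R r m2.
      case: ob => [->|/PE[m hm ->]]; first by exists r.+1; [lia | rewrite (qpos_last R r)].
      by exists m => //; lia.
    have h12 : (m1 < m2)%N by rewrite -(qpos_ltE R r) -ea -eb.
    have e2 : m2 = m1.+1.
      apply/eqP; rewrite eqn_leq h12 andbT leqNgt; apply/negP => hlt.
      apply: (nab (qpos R r m1.+1)).
      * by apply/PE; exists m1.+1 => //; lia.
      * by rewrite ea eb !qpos_ltE; lia.
    by exists m1; [lia | rewrite /qf ea eb e2].
  + move=> [m hm [-> ->]]; split.
    * case: m hm => [|m] hm; first by left; rewrite (qpos0 R r).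
      by right; apply/PE; exists m.+1 => //; lia.
    * case: (ltnP m r) => hmr; first by right; apply/PE; exists m.+1 => //; lia.
      by left; rewrite (_ : m = r); [rewrite (qpos_last R r) | lia].
    * by rewrite qpos_ltE.
    * move=> w /PE[m' hm' ->]; rewrite !qpos_ltE; lia.
- move=> p /gs0P[m hm ->]; rewrite J0_qf //; lia.
- move=> p /gs0P[m hm ->]; rewrite J0_qf // /qf /= qpos_S.
  by rewrite addrAC subrr add0r; congr lenj; lia.
- move=> j hj; rewrite big_mkcond /= /gs0 /mkseq big_map.
  rewrite (eq_big_seq (fun m : nat => if (j - r.+1)%N == m then (1:R) else 0)).
    have := sum_delta R 0 r.+1 (j - r.+1)%N (fun=> 1); rewrite /index_iota subn0 => ->; first by [].
    lia.
  move=> m; rewrite mem_iota add0n => hm; rewrite J0_qf // expr0 invr1.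
  have -> : (m + r.+1 == j) = ((j - r.+1)%N == m) by apply/idP/idP => /eqP h; apply/eqP; lia.
  by [].
- move=> p q /gs0P[m1 hm1 ->] /gs0P[m2 hm2 ->].
  rewrite /qf /= !qpos_S !(addrAC _ _ (- _)) !subrr !add0r.
  apply: lenj_ratio0; lia.
- exists t0 => //; rewrite size_mkseq; lia.
Qed.


Lemma count_le1 (T : eqType) (a : pred T) (l : seq T) :
  uniq l -> (forall p q, p \in l -> q \in l -> a p -> a q -> p = q) -> (count a l <= 1)%N.
Proof.
move=> ul h; rewrite -size_filter.
have uf : uniq (seq.filter a l) by rewrite filter_uniq.
case E : (seq.filter a l) uf => [|x [|y t]] //= /andP[].
have hx : x \in seq.filter a l by rewrite E inE eqxx.
have hy : y \in seq.filter a l by rewrite E !inE eqxx orbT.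
move: hx hy; rewrite !mem_filter => /andP[ax xl] /andP[ay yl].
by rewrite (h x y xl yl ax ay) inE eqxx.
Qed.

Lemma loadE t : load s d t = #|[set j : 'I_n | present s d j t]%SET|.
Proof.
rewrite /load; apply: eq_card => j; rewrite inE.
apply/idP/idP; rewrite ?in_setE //.
Qed.

Hypothesis hinst : instance s d.

Lemma count_step (k : nat) (hk : (k < n)%N) (gs : seq (R * R)) :
  in01 (U k) ->
  (forall x, U k x -> occupied s d X (Ordinal hk) x) ->
  uniq gs -> (forall p, p \in gs -> gapU (U k) p.1 p.2) ->
  (size gs <= load s d (s (Ordinal hk)))%N.
Proof.
move=> h01 hocc ug hg.
set i := Ordinal hk.
have [hsd _ hmono] := hinst.
pose gs' := seq.filter (fun p : R * R => p.1 != 0) gs.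
have h1 : (size gs <= (size gs').+1)%N.
  rewrite -(count_predC (fun p : R * R => p.1 != 0) gs) size_filter.
  rewrite -addn1 leq_add2l; apply: count_le1 => // p q hp hq /= /negPn/eqP p0 /negPn/eqP q0.
  have gp := hg p hp; have gq := hg q hq.
  move: gp gq; case: p hp p0 => a b hp /= ->; case: q hq q0 => a' b' hq /= -> gp gq.
  by rewrite (gap_left_inj h01 gp gq).
pose f (p : R * R) := odflt i [pick j : 'I_n | (j < k)%N && (s i <= d j) && (X j == p.1)].
have hf : forall p, p \in gs' -> [/\ (f p < k)%N, s i <= d (f p) & X (f p) = p.1].
  move=> p; rewrite mem_filter => /andP[p0 hp].
  have hu : U k p.1.
    by case: (hg p hp) => [[e|//] _ _ _]; rewrite e eqxx in p0.
  have [j [hj1 hj2 hj3]] := hocc _ hu.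
  rewrite /f; case: pickP => [j' /andP[/andP[-> ->] /eqP ->]//|/(_ j)].
  by rewrite hj1 hj2 hj3 eqxx.
have uf : uniq (map f gs').
  rewrite map_inj_in_uniq ?filter_uniq // => p q hp hq e.
  have [_ _ ep] := hf p hp; have [_ _ eq] := hf q hq.
  have e1 : p.1 = q.1 by rewrite -ep -eq e.
  move: hp hq; rewrite !mem_filter => /andP[_ hp] /andP[_ hq].
  have gp := hg p hp; have gq := hg q hq.
  move: gp gq e1; case: p {hp ep e} => a b; case: q {hq eq} => a' b' /= gp gq e1.
  by subst a'; rewrite (gap_left_inj h01 gp gq).
pose A := [set j : 'I_n | (j < k)%N && present s d j (s i)].
have hA : (size gs' <= #|A|)%N.
  rewrite -(size_map f) cardE; apply: uniq_leq_size => // j /mapP[p hp ->].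
  have [fk sd _] := hf p hp.
  rewrite mem_enum inE fk /present sd andbT /=; apply: hmono; exact: ltnW.
have hAB : A \proper [set j | present s d j (s i)].
  apply/properP; split.
  - by apply/fintype.subsetP => j; rewrite !inE => /andP[].
  - exists i; first by rewrite inE /present lexx /= ltW.
    by rewrite inE /= ltnn.
apply: (leq_trans h1); apply: (leq_ltn_trans hA); rewrite loadE; exact: proper_card hAB.
Qed.


Lemma lenjS j e : lenj R r j e.+1 = lenj R r j e / 2.
Proof. by rewrite /lenj exprS -mulrA invfM mulrC. Qed.

Lemma mid_step (P P' : R -> Prop) gs J E a b :
  in01 P -> inv3 P gs J E -> gapU P a b ->
  (forall a' b', gapU P a' b' -> b' - a' <= b - a) ->
  (forall x, P' x <-> P x \/ x = (a + b) / 2) ->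
  (exists2 t, t <= horizon d & (size gs <= load s d t)%N) ->
  exists gs' J' E', inv3 P' gs' J' E'.
Proof.
move=> h01 [ug hgap hlab hlen hsum hrat _] gab hlarge hP' [t ht hcnt].
set m := (a + b) / 2.
have [a0 b1] := gapU_bounds h01 gab.
have [oa ob ab nab] := gab.
have am : a < m by rewrite /m; lra.
have mb : m < b by rewrite /m; lra.
have nPm : ~ P m by move=> pm; apply: (nab m pm); rewrite am mb.
set pab := (a, b).
have pin : pab \in gs by apply/hgap.
have amN : (a, m) \notin gs.
  apply/negP => /hgap [_ [e|pm] _ _]; [lra | exact: nPm].
have mbN : (m, b) \notin gs.
  apply/negP => /hgap [[e|pm] _ _ _]; [lra | exact: nPm].
pose newp (p : R * R) := (p == (a, m)) || (p == (m, b)).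
pose J' p := if newp p then J pab else J p.
pose E' p := if newp p then (E pab).+1 else E p.
pose gs' := [:: (a, m), (m, b) & rem pab gs].
have remE : forall p, p \in rem pab gs -> p \in gs /\ ~~ newp p.
  move=> p hp; have hpg : p \in gs by apply: (mem_rem hp).
  split => //; rewrite /newp; apply/negP => /orP[] /eqP e; subst p.
  - by rewrite hpg in amN.
  - by rewrite hpg in mbN.
have memrem : forall p, (p \in rem pab gs) = (p != pab) && (p \in gs).
  by move=> p; rewrite (mem_rem_uniq _ ug) inE.
have hne : (a, m) != (m, b) by apply/negP => /eqP [e _]; lra.
have newJ : J' (a, m) = J pab /\ J' (m, b) = J pab by rewrite /J' /newp !eqxx ?orbT.
have newE : E' (a, m) = (E pab).+1 /\ E' (m, b) = (E pab).+1 by rewrite /E' /newp !eqxx ?orbT.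
have len2 : forall p, p \in gs' -> (p.2 - p.1 = (b - a) / 2 /\ J' p = J pab /\ E' p = (E pab).+1)
                                   \/ (p \in gs /\ J' p = J p /\ E' p = E p).
  move=> p; rewrite !inE => /orP[/eqP->|/orP[/eqP->|hp]].
  - by left; rewrite /= /m; split; [field | split; [exact: newJ.1 | exact: newE.1]].
  - by left; rewrite /= /m; split; [field | split; [exact: newJ.2 | exact: newE.2]].
  - have [hpg nn] := remE p hp; right; split => //.
    by rewrite /J' /E' (negbTE nn).
have lenab : b - a = lenj R r (J pab) (E pab) by apply: (hlen pab pin).
exists gs', J', E'; split.
- rewrite /gs' /= !inE negb_or hne /= (contra (@mem_rem _ _ _ _) amN).
  by rewrite (contra (@mem_rem _ _ _ _) mbN) rem_uniq.
- move=> x y; rewrite (gapU_ext (P' := fun w => P w \/ w = m) hP' x y).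
  rewrite (gap_mid h01 gab x y) -/m /gs' !inE memrem.
  split.
  + case=> [[/hgap hg hn]|[e|e]]; rewrite ?e ?eqxx ?orbT //.
    by rewrite hg andbT; apply/orP; right; apply/orP; right; apply/eqP.
  + case/orP=> [/eqP e|/orP[/eqP e|/andP[/eqP hn hg]]]; [by right; left | by right; right |].
    by left; split => //; apply/hgap.
- move=> p /len2 [[_ [-> _]]|[hp [-> _]]]; [exact: hlab | exact: hlab].
- move=> p /len2 [[-> [-> ->]]|[hp [-> ->]]]; last exact: hlen.
  by rewrite lenjS -lenab.
- move=> j hj.
  rewrite /gs' !big_cons (proj1 newJ) (proj2 newJ) (proj1 newE) (proj2 newE).
  rewrite -[RHS](hsum j hj) (perm_big _ (perm_to_rem pin)) big_cons /=.
  have -> : \sum_(p <- rem pab gs | J' p == j) ((2:R) ^+ E' p)^-1 =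
            \sum_(p <- rem pab gs | J p == j) ((2:R) ^+ E p)^-1.
    rewrite big_mkcond [in RHS]big_mkcond; apply: eq_big_seq => p hp.
    by have [_ nn] := remE p hp; rewrite /J' /E' (negbTE nn).
  case: (J pab == j) => /=; last by [].
  rewrite addrA; congr (_ + _); rewrite exprS invfM; field; exact: expf_neq0.
- move=> p q hp hq.
  have lab0 : 0 < b - a by lra.
  have big1 : forall p0, p0 \in gs -> p0.2 - p0.1 <= b - a.
    by move=> [x y] /hgap g; apply: hlarge.
  have big2 : forall q0, q0 \in gs -> b - a <= 2 * (q0.2 - q0.1).
    by move=> q0 hq0; apply: (hrat pab q0 pin hq0).
  case: (len2 p hp) => [[-> _]|[hp' _]]; case: (len2 q hq) => [[-> _]|[hq' _]].
  + lra.
  + have := big2 q hq'; lra.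
  + have := big1 p hp'; lra.
  + exact: hrat.
- exists t => //; rewrite /gs' /= size_rem //; move: hcnt.
  have : (0 < size gs)%N by case: (gs) pin.
  by move=> h0 h; rewrite prednK // ltnS.
Qed.


Lemma d_le_horizon i : d i <= horizon d.
Proof. rewrite /horizon; exact: le_bigmax_cond. Qed.

Lemma inv3_ext (P P' : R -> Prop) gs J E : (forall x, P x <-> P' x) -> inv3 P gs J E -> inv3 P' gs J E.
Proof.
move=> h [u g l le su ra c]; split => //.
by move=> a b; rewrite -(gapU_ext h a b).
Qed.

Lemma in01_ext (P P' : R -> Prop) : (forall x, P x <-> P' x) -> in01 P -> in01 P'.
Proof. by move=> h h01 x /h /h01. Qed.

Lemma Qpt01 (q : 'I_r) : 0 < Qpt R q < 1.
Proof.
rewrite /Qpt -(qpos0 R r) -(qpos_last R r) !qpos_ltE; have := ltn_ord q; lia.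
Qed.

Variable tau : {perm 'I_r}.
Hypothesis halg : alg_output tau s d X.
Hypothesis hr : (0 < r)%N.
Hypothesis hm : exists2 t, t <= horizon d & (r < load s d t)%N.

Definition Qall k := forall q : 'I_r, U k (Qpt R q).
Definition Inv k := in01 (U k) /\
  ((Qall k /\ exists gs J E, inv3 (U k) gs J E) \/
   (~ Qall k /\ forall x, U k x -> exists q : 'I_r, x = Qpt R q)).

Lemma Inv0 : Inv 0.
Proof.
split; first by move=> x [j []].
right; split; last by move=> x [j []].
by move=> /(_ (Ordinal hr)) [j []].
Qed.

Lemma Inv_step k (hk : (k < n)%N) : Inv k -> Inv k.+1.
Proof.
move=> [h01 hph].
set i := Ordinal hk.
have hUS := U_succ hk.
have := halg i; rewrite /alg_step.
change (used X i) with (U k).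
case=> [[_ [hu _]]|[[nvac [_ [k' [eX hnu _]]]]|[nvac [hQ [a [b [gab hlarge eX]]]]]]].
-
  have hE : forall x, U k x <-> U k.+1 x.
    move=> x; rewrite hUS; split; [by left | by case=> // ->].
  split; first exact: (in01_ext hE).
  case: hph => [[hq [gs [J [E hi]]]]|[nq hsub]].
  + left; split; first by move=> q; apply/hE.
    by exists gs, J, E; apply: (inv3_ext hE).
  + right; split; first by move=> hq; apply: nq => q; apply/hE.
    by move=> x /hE /hsub.
-
  case: hph => [[hq _]|[nq hsub]]; first by exfalso; apply: hnu; apply: hq.
  have h01' : in01 (U k.+1).
    by move=> x /hUS [/h01 //|->]; rewrite eX; exact: Qpt01.
  have hsub' : forall x, U k.+1 x -> exists q : 'I_r, x = Qpt R q.
    by move=> x /hUS [/hsub //|->]; exists (tau k').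
  split => //.
  case: (pselect (Qall k.+1)) => hq; last by right.
  left; split => //.
  have hP : forall x, U k.+1 x <-> exists q : 'I_r, x = Qpt R q.
    by move=> x; split; [exact: hsub' | move=> [q ->]; exact: hq].
  by have [_ ?] := init_inv hr hP hm.
-
  case: hph => [[hq [gs [J [E hi]]]]|[nq _]]; last by exfalso; apply: nq.
  have gab' : gapU (U k) a b by apply/(gap_U i).
  have hlarge' : forall a' b', gapU (U k) a' b' -> b' - a' <= b - a.
    by move=> a' b' /(gap_U i); apply: hlarge.
  have hP' : forall x, U k.+1 x <-> U k x \/ x = (a + b) / 2.
    by move=> x; rewrite hUS eX.
  have hocc : forall x, U k x -> occupied s d X i x.
    move=> x hx; case: (pselect (occupied s d X i x)) => // no.
    by exfalso; apply: nvac; exists x; split.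
  have hcnt : exists2 t, t <= horizon d & (size gs <= load s d t)%N.
    exists (s i); first by have [hsd _ _] := hinst; exact: (le_trans (ltW (hsd i)) (d_le_horizon i)).
    apply: (count_step h01 hocc (i3_uniq hi)) => p hp.
    by apply/(i3_gap hi); case: p hp.
  have [gs' [J' [E' hi']]] := mid_step h01 hi gab' hlarge' hP' hcnt.
  have [a0 b1] := gapU_bounds h01 gab'.
  have [_ _ ab _] := gab'.
  split.
  + move=> x /hP' [/h01 //|->]; apply/andP; split; lra.
  + left; split; last by exists gs', J', E'.
    by move=> q; apply: (U_mono (leqnSn k)); apply: hq.
Qed.

Lemma Inv_all k : (k <= n)%N -> Inv k.
Proof.
elim: k => [|k IH] hk; first exact: Inv0.
exact: (Inv_step hk (IH (ltnW hk))).
Qed.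


Lemma present_distinct1 (i j : 'I_n) t : (j < i)%N ->
  present s d i t -> present s d j t -> X i <> X j.
Proof.
move=> ji /andP[si it] /andP[sj jt] e.
have := halg i; rewrite /alg_step.
case=> [[_ [_ nocc]]|[[_ [_ [k' [eX hnu _]]]]|[_ [_ [a [b [[_ _ ab hno] _ eX]]]]]]].
- by apply: nocc; exists j; split; [exact: ji | exact: (le_trans si jt) | rewrite e].
- by apply: hnu; exists j; split => //; rewrite -e.
- apply: (hno j ji); rewrite -e eX; apply/andP; split; lra.
Qed.

Lemma present_distinct (i j : 'I_n) t : i != j ->
  present s d i t -> present s d j t -> X i <> X j.
Proof.
move=> ne pi pj; case: (ltngtP i j) => h.
- by move=> e; apply: (present_distinct1 h pj pi); rewrite e.
- exact: (present_distinct1 h pi pj).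
- by move: ne; rewrite (val_inj h) eqxx.
Qed.

Lemma Qall_n : Qall n.
Proof.
have [_ [[//]|[_ hsub]]] := Inv_all (leqnn n).
exfalso; have [t ht hl] := hm.
have : (load s d t <= r)%N.
  rewrite loadE.
  pose f (j : 'I_n) := odflt (Ordinal hr) [pick q : 'I_r | X j == Qpt R q].
  have hf : forall j : 'I_n, X j = Qpt R (f j).
    move=> j; have [q eq] := hsub (X j) (ex_intro _ j (conj (ltn_ord j) erefl)).
    rewrite /f; case: pickP => [q' /eqP //|/(_ q)]; by rewrite eq eqxx.
  rewrite -[X in (_ <= X)%N]card_ord; apply: (@leq_card_in _ _ f) => j1 j2.
  rewrite !inE => p1 p2 e.
  apply/eqP; case: (pselect (j1 = j2)) => [-> //|ne]; exfalso.
  by apply: (present_distinct (t := t) _ p1 p2); [apply/eqP | rewrite !hf e].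
lia.
Qed.

Lemma spread (D : R) (Y : 'I_n -> R) m : forall A : {set 'I_n}, #|A| = m.+1 ->
  (forall i, i \in A -> D < Y i) ->
  (forall i j, i \in A -> j \in A -> i != j -> D < `|Y i - Y j|) ->
  exists2 i, i \in A & m.+1%:R * D < Y i.
Proof.
elim: m => [|m IH] A hA hD hsep.
- have : (0 < #|A|)%N by rewrite hA.
  rewrite card_gt0 => /set0Pn[i hi]; exists i => //; rewrite mul1r; exact: hD.
- have : (0 < #|A|)%N by rewrite hA.
  rewrite card_gt0 => /set0Pn[i hi].
  have [i0 hi0 hmax] := eq_bigmax (x := D) i (fun j => j \in A) Y hi (fun j hj => ltW (hD j hj)).
  have hle : forall j, j \in A -> Y j <= Y i0.
    by move=> j hj; rewrite -hmax; exact: (le_bigmax_cond D Y hj).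
  have hA' : #|A :\ i0| = m.+1 by move: hA; rewrite (cardsD1 i0) hi0 => [[]].
  have [i1 hi1 hY1] := IH (A :\ i0) hA' (fun j hj => hD j (fintype.subsetP (subD1set A i0) j hj))
     (fun j k hj hk => hsep j k (fintype.subsetP (subD1set A i0) j hj) (fintype.subsetP (subD1set A i0) k hk)).
  move: hi1; rewrite !inE => /andP[ne1 hi1].
  have h1 := hle i1 hi1.
  have h2 := hsep i0 i1 hi0 hi1 ltac:(by rewrite eq_sym).
  rewrite ger0_norm in h2; last lra.
  exists i0 => //.
  rewrite -(natr1 m.+1) mulrDl mul1r; lra.
Qed.


Lemma seq_argmax (T : eqType) (f : T -> R) (l : seq T) : l != [::] ->
  exists2 p, p \in l & forall q, q \in l -> f q <= f p.
Proof.
elim: l => [//|x l IH] _.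
case: (eqVneq l [::]) => [->|ne].
  by exists x; rewrite ?inE ?eqxx // => q; rewrite inE => /eqP ->.
have [p hp hmax] := IH ne.
case: (leP (f x) (f p)) => h.
- exists p; first by rewrite inE hp orbT.
  by move=> q; rewrite inE => /orP[/eqP ->|/hmax].
- exists x; first by rewrite inE eqxx.
  move=> q; rewrite inE => /orP[/eqP ->//|/hmax hq]; exact: (le_trans hq (ltW h)).
Qed.

Lemma opt_bound t L : t <= horizon d -> load s d t = L.+1 ->
  (OPT_A s d <= ((L.+2)%:R^-1)%:E)%E.
Proof.
move=> ht hL; apply/ereal_supP => y [X' hX' <-].
have hinf : (objective s d X' <= dmin s d X' t)%E.
  by apply: ereal_inf_lbound; exists t.
apply: (le_trans hinf); rewrite leNgt; apply/negP => hlt.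
set D : R := (L.+2)%:R^-1.
have [_ hall] := bigmin_gtP _ _ _ _ hlt.
have hD : forall i, present s d i t -> D < X' i /\ D < 1 - X' i.
  move=> i pi; have := hall i pi; rewrite lt_min => /andP[h1 _].
  move: h1; rewrite lte_fin /dist_bd lt_min subr0 => /andP[h1 h2].
  have [x0 x1] := andP (hX' i).
  rewrite ger0_norm // in h1; rewrite ler0_norm ?opprB // in h2; last lra.
have hsep : forall i j, present s d i t -> present s d j t -> i != j -> D < `|X' i - X' j|.
  move=> i j pi pj ne; have := hall i pi; rewrite lt_min => /andP[_ h2].
  have [_ hall2] := bigmin_gtP _ _ _ _ h2.
  by have := hall2 j; rewrite pj eq_sym ne lte_fin => /(_ isT).
have hA : #|[set j : 'I_n | present s d j t]%SET| = L.+1 by rewrite -loadE.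
have hD1 : forall i, i \in [set j : 'I_n | present s d j t]%SET -> D < X' i.
  by move=> i; rewrite inE => /hD [].
have hsep1 : forall i j, i \in [set j : 'I_n | present s d j t]%SET ->
    j \in [set j : 'I_n | present s d j t]%SET -> i != j -> D < `|X' i - X' j|.
  by move=> i j; rewrite !inE; apply: hsep.
have [i hi hY] := spread hA hD1 hsep1.
move: hi; rewrite inE => /hD [_].
have : L.+2%:R * D = 1 by rewrite /D mulfV // pnatr_eq0.
rewrite -(natr1 L.+1) mulrDl mul1r => e h; lra.
Qed.

Lemma sep_gs gs J E (delta : R) : in01 (U n) -> inv3 (U n) gs J E ->
  (forall p, p \in gs -> delta <= p.2 - p.1) ->
  forall x y, (x = 0 \/ U n x) -> (y = 1 \/ U n y) -> x < y -> delta <= y - x.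
Proof.
move=> h01 hi hp x y ox oy xy.
have [z [gz zy]] := gap_next h01 ox oy xy.
have := hp (x, z) (proj1 (i3_gap hi x z) gz) => /= h; lra.
Qed.

Lemma alg_bound (delta : R) : in01 (U n) ->
  (forall x y, (x = 0 \/ U n x) -> (y = 1 \/ U n y) -> x < y -> delta <= y - x) ->
  (delta%:E <= objective s d X)%E.
Proof.
move=> h01 hsep; apply/ereal_infP => y [t _ <-].
apply: le_bigmin; first exact: leey.
move=> i pi; have Ui : U n (X i) by exists i.
have [x0 x1] := andP (h01 _ Ui).
rewrite le_min; apply/andP; split.
- rewrite lee_fin /dist_bd le_min subr0; apply/andP; split.
  + rewrite ger0_norm; last exact: ltW.
    by have := hsep 0 (X i) (or_introl erefl) (or_intror Ui) x0; rewrite subr0.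
  + rewrite ler0_norm ?opprB; last lra.
    exact: hsep (X i) 1 (or_intror Ui) (or_introl erefl) x1.
- apply: le_bigmin; first exact: leey.
  move=> j /andP[pj ne]; have Uj : U n (X j) by exists j.
  have nej : X i <> X j by apply: (present_distinct (t := t)); rewrite // eq_sym.
  rewrite lee_fin; case: (ltgtP (X i) (X j)) => h.
  + rewrite distrC ger0_norm; last lra.
    exact: hsep (X i) (X j) (or_intror Ui) (or_intror Uj) h.
  + rewrite ger0_norm; last lra.
    exact: hsep (X j) (X i) (or_intror Uj) (or_intror Ui) h.
  + by exfalso; apply: nej.
Qed.


Lemma main : (OPT_A s d <= (2 * sg)%:E * objective s d X)%E.
Proof.
have [h01 [[_ [gs [J [E hi]]]]|[nq _]]] := Inv_all (leqnn n); last first.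
  by exfalso; apply: nq; exact: Qall_n.
have gsn : gs != [::].
  apply/negP => /eqP e; have := i3_sum hi (j := r.+1) ltac:(lia).
  rewrite e big_nil => /esym/eqP; rewrite oner_eq0.
  by [].
have [pm hpm hmax] := seq_argmax (fun p : R * R => p.2 - p.1) gsn.
set g := pm.2 - pm.1.
have g0 : 0 < g.
  rewrite /g (i3_len hi hpm); apply: lenj_gt0; have := i3_lab hi hpm; lia.
have hcb := @count_bound R r gs J E g g0 (i3_lab hi) (i3_len hi) (i3_sum hi) hmax.
have sg0 := sigma_gt0 R r.
have [tt htt [L hL hsz]] : exists2 tt, tt <= horizon d &
    exists2 L, load s d tt = L.+1 & (size gs <= L.+2)%N.
  have [t1 ht1 hc1] := i3_cnt hi.
  case E1 : (load s d t1) hc1 => [|L] hc1.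
  - have [t0 ht0 hl0] := hm.
    exists t0 => //; exists (load s d t0).-1; first by rewrite prednK //; lia.
    lia.
  - by exists t1 => //; exists L.
have hopt := opt_bound htt hL.
set delta := g / 2.
have hdel : forall p, p \in gs -> delta <= p.2 - p.1.
  by move=> p hp; have := i3_ratio hi hpm hp; rewrite /delta -/g => h; lra.
have halg' := alg_bound h01 (sep_gs h01 hi hdel).
apply: (le_trans hopt).
have key : (L.+2)%:R^-1 <= 2 * sg * delta.
  have -> : 2 * sg * delta = ((sg * g)^-1)^-1 by rewrite invrK /delta; field.
  rewrite lef_pV2 ?posrE ?invr_gt0 ?mulr_gt0 ?ltr0n //.
  apply: (le_trans hcb); rewrite ler_nat //.
apply: (le_trans (y := ((2 * sg)%:E * delta%:E)%E)).
  by rewrite -EFinM lee_fin.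
apply: lee_wpmul2l => //; rewrite lee_fin; apply: mulr_ge0 => //; exact: ltW.
Qed.

End Main.

Unset Implicit Arguments.

Theorem lemma1 (R : realType) (r : nat) (tau : 'S_r) (n : nat)
    (s d X : 'I_n -> R) :
  (0 < r)%N ->
  instance s d ->
  (exists2 t : R, t <= horizon d & (r < load s d t)%N) ->
  alg_output tau s d X ->
  (OPT_A s d <= (2 * sigma R r)%:E * objective s d X)%E.
Proof.
move=> hr hinst hm halg.
exact: (main hinst halg hr hm).
Qed.
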